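(* Let $A,B,s>0$ and $p$ a positive integer, with $s\ge1$ and $p\le\sqrt B$. Then \[ \frac{p^2}{e}\le\sum_{\substack{k_1,k_2\in\mathbb{Z}\\ |k_1p-A|\le s\sqrt B,\ |k_2p-A|\le s\sqrt B}}(k_1p-k_2p)^2\exp\left(-\frac{(k_1p-A)^2}{2B}-\frac{(k_2p-A)^2}{2B}\right)\le\frac{24e^4\pi B^2}{p^2}. \] *)

(* Defs.v *)
From HB Require Import structures.
From mathcomp Require Import all_boot all_order all_algebra.
From mathcomp Require Import all_classical all_reals all_analysis.
Set Implicit Arguments. Unset Strict Implicit. Unset Printing Implicit Defensive.
Import Order.TTheory GRing.Theory Num.Theory.
Local Open Scope ring_scope.

(* The (finite) set of integers k with |k p - A| <= s sqrt B, enumerated as a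
   duplicate-free sequence.  Every such k satisfies |k| <= (|A| + s sqrt B)/p,
   hence lies in [-N, N] with N below, so the filter enumerates exactly all of them
   (when p > 0). *)
Definition window_bound (R : realType) (p : nat) (A B s : R) : nat :=
  (`|Num.floor ((`|A| + s * Num.sqrt B) / p%:R)|%N + 1)%N.

Definition window (R : realType) (p : nat) (A B s : R) : seq int :=
  let N := window_bound p A B s in
  [seq k <- [seq (i%:Z - N%:Z)%R | i <- iota 0 (N + N).+1]
     | `|(k%:~R : R) * p%:R - A| <= s * Num.sqrt B].

Definition claim_sum (R : realType) (p : nat) (A B s : R) : R :=
  \sum_(k1 <- window p A B s) \sum_(k2 <- window p A B s)
     ((k1%:~R * p%:R - k2%:~R * p%:R) ^+ 2 *
      expR (- ((k1%:~R * p%:R - A) ^+ 2) / (2 * B)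
            - ((k2%:~R * p%:R - A) ^+ 2) / (2 * B))).

(* Main.v *)
Require Import Defs.
From HB Require Import structures.
From mathcomp Require Import all_boot all_order all_algebra.
From mathcomp Require Import all_classical all_reals all_analysis.
From mathcomp Require Import ring lra zify.
Import Order.TTheory GRing.Theory Num.Theory.
Local Open Scope ring_scope.
Section G.
Context {R : realType}.

Definition Phi (y : R) : R := if 0 <= y then 1 - expR (- y) else expR y - 1.

Lemma expR_le1' (y : R) : y <= 0 -> expR y <= 1.
Proof. by move=> h; rewrite -expR0 ler_expR. Qed.

Lemma Phi_bnd y : -1 <= Phi y <= 1.
Proof.
rewrite /Phi; case: ifP => h; have := expR_gt0 (-y); have := expR_gt0 y.
- have := expR_le1' (-y); lra.
- have := expR_le1' y; lra.
Qed.

Lemma expRNK (d : R) : expR d * expR (- d) = 1.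
Proof. by rewrite -expRD subrr expR0. Qed.

Lemma Phi_step (d y : R) : 0 < d ->
  d * expR (- `|y|) <= expR d * (Phi y - Phi (y - d)).
Proof.
move=> d0; have E1 := expR_ge1Dx d; have EF := expRNK d.
have Fp := expR_gt0 (-d); have Ep := expR_gt0 d.
rewrite /Phi.
case: ifP => h1; case: ifP => h2.
- rewrite ger0_norm //.
  have -> : expR (-(y-d)) = expR (-y) * expR d by rewrite -expRD; congr expR; ring.
  have u0 := expR_gt0 (- y). have h : d <= expR d * (expR d - 1) by nra.
  have := ler_wpM2l (ltW u0) h. nra.
- rewrite ger0_norm //.
  move/negbT: h2; rewrite -ltNge => h2.
  have u0 := expR_gt0 (- y). have u1 := expR_le1' (-y).
  have w1 : expR (y - d) <= 1 by apply: expR_le1'; lra.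
  have w0 := expR_gt0 (y - d).
  have uw : expR (- y) * expR (y - d) = expR (- d) by rewrite -expRD; congr expR; ring.
  have u1' : expR (-y) <= 1 by apply: u1; lra.
  have k1 : 1 - expR (-d) <= 2 - expR (-y) - expR (y - d) by nra.
  have k2 := ler_wpM2l (ltW Ep) k1.
  have k3 : d * expR (-y) <= d by nra.
  nra.
- move/negbT: h1; rewrite -ltNge => h1; lra.
- move/negbT: h1; rewrite -ltNge => h1.
  rewrite ltr0_norm // opprK.
  have v0 := expR_gt0 y.
  have vw : expR (y - d) = expR y * expR (- d) by rewrite expRD.
  rewrite vw. nra.
Qed.

Lemma gauss_exp (y : R) : expR (- y ^+ 2) <= expR (1/4) * expR (- `|y|).
Proof.
rewrite -expRD ler_expR -real_normK ?num_real //.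
have := sqr_ge0 (`|y| - 1/2). move: (`|y|) => u. rewrite sqrrB. lra.
Qed.

Lemma gauss_sum (d c : R) n : 0 < d -> d <= 1/2 ->
  \sum_(i <- iota 0 n) expR (- (c + i.+1%:R * d) ^+ 2) <= 2 * expR 1 / d.
Proof.
move=> d0 dh.
pose F i := Phi (c + i%:R * d).
have step : forall i : nat, expR (- (c + i.+1%:R * d) ^+ 2) <=
   (expR (1/4) * expR d / d) * (F i.+1 - F i).
  move=> i; apply: le_trans (gauss_exp _) _.
  have := @Phi_step d (c + i.+1%:R * d) d0.
  have -> : c + i.+1%:R * d - d = c + i%:R * d by rewrite -addn1 natrD; ring.
  move=> h; rewrite -!mulrA; apply: ler_wpM2l; first exact: ltW (expR_gt0 _).
  rewrite mulrCA ler_pdivlMl //.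
apply: le_trans (ler_sum _ (fun i _ => step i)) _.
rewrite -mulr_sumr.
have -> : \sum_(i <- iota 0 n) (F i.+1 - F i) = F n - F 0.
  by rewrite -telescope_sumr // /index_iota subn0.
have b1 := Phi_bnd (c + n%:R * d); have b2 := Phi_bnd (c + 0%:R * d).
have e1 : expR (1/4) * expR d <= expR 1 by rewrite -expRD ler_expR; lra.
have eg := expR_gt0 (1/4); have eg2 := expR_gt0 d.
rewrite /F.
set P := Phi _ - Phi _.
have P2 : P <= 2 by rewrite /P; lra.
have P0 : 0 <= expR (1 / 4) * expR d / d by apply: divr_ge0; [apply: mulr_ge0; apply: ltW|lra].
apply: le_trans (ler_wpM2l P0 P2) _.
rewrite mulrC mulrA ler_pM2r ?invr_gt0 //; lra.
Qed.
End G.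

Section M.
Context {R : realType}.

Lemma mem_window (p : nat) (A B s : R) (k : int) : (0 < p)%N ->
  `|(k%:~R : R) * p%:R - A| <= s * Num.sqrt B -> k \in window p A B s.
Proof.
move=> p0 hk; rewrite /window mem_filter hk andTb.
set X := (`|A| + s * Num.sqrt B) / p%:R.
have pR : (0 : R) < p%:R by rewrite ltr0n.
have hX : (`|k|%:~R : R) <= X.
  rewrite intr_norm /X ler_pdivlMr //.
  rewrite -(normr_nat R p) -normrM.
  have := ler_normD ((k%:~R : R) * p%:R - A) A; rewrite subrK.
  lra.
have X0 : 0 <= X by apply: le_trans hX; rewrite ler0z.
have hf : `|k| <= Num.floor X by rewrite floor_ge_int.
have f0 : 0 <= Num.floor X by rewrite floor_ge0.
rewrite -/(window_bound p A B s).
set N := window_bound p A B s.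
have hN : (N%:Z = Num.floor X + 1)%R.
  by rewrite /N /window_bound -/X PoszD gez0_abs.
apply/mapP; exists (absz (k + N%:Z)).
  rewrite mem_iota /=.
  have : 0 <= k + N%:Z by rewrite hN; move: hf; rewrite -abszE; lia.
  move=> h; move: hf; rewrite -abszE => hf.
  lia.
have : 0 <= k + N%:Z by rewrite hN; move: hf; rewrite -abszE; lia.
move=> h; rewrite gez0_abs //; ring.
Qed.

Lemma key (x1 x2 B : R) : 0 < B ->
  (x1 - x2) ^+ 2 * expR (- (x1 ^+ 2) / (2 * B) - x2 ^+ 2 / (2 * B)) <=
  16 * B * (expR (- (x1 ^+ 2) / (4 * B)) * expR (- (x2 ^+ 2) / (4 * B))).
Proof.
move=> B0.
have hx : forall x : R, 0 < expR (- (x ^+ 2) / (4 * B)) /\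
    expR (- (x ^+ 2) / (4 * B)) <= 1 /\ x ^+ 2 * expR (- (x ^+ 2) / (4 * B)) <= 4 * B.
  move=> x; split; first exact: expR_gt0.
  have w0 : 0 <= x ^+ 2 / (4 * B) by apply: divr_ge0; [exact: sqr_ge0|lra].
  split; first by rewrite -[X in _ <= X]expR0 ler_expR mulNr oppr_le0.
  have e := expR_ge1Dx (x ^+ 2 / (4 * B)).
  have ee : expR (x ^+ 2 / (4 * B)) * expR (- (x ^+ 2) / (4 * B)) = 1.
    by rewrite -expRD mulNr subrr expR0.
  have hp := expR_gt0 (- (x ^+ 2) / (4 * B)).
  have : x ^+ 2 / (4 * B) * expR (- (x ^+ 2) / (4 * B)) <= 1 by nra.
  move=> h1.
  have -> : x ^+ 2 * expR (- (x ^+ 2) / (4 * B)) =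
     4 * B * (x ^+ 2 / (4 * B) * expR (- (x ^+ 2) / (4 * B))) by field; lra.
  nra.
have -> : expR (- (x1 ^+ 2) / (2 * B) - x2 ^+ 2 / (2 * B)) =
   (expR (- (x1 ^+ 2) / (4 * B)) ^+ 2) * (expR (- (x2 ^+ 2) / (4 * B)) ^+ 2).
  rewrite -!expRM_natl -expRD; congr expR; field; lra.
have [a0 [a1 a2]] := hx x1; have [b0 [b1 b2]] := hx x2.
move: a0 a1 a2 b0 b1 b2.
set a := expR _; set b := expR _.
move=> a0 a1 a2 b0 b1 b2.
have s1 : (x1 - x2) ^+ 2 <= 2 * x1 ^+ 2 + 2 * x2 ^+ 2 by have := sqr_ge0 (x1 + x2); lra.
have ab0 : 0 <= a ^+ 2 * b ^+ 2 by apply: mulr_ge0; apply: sqr_ge0.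
have t1 := ler_wpM2r ab0 s1.
apply: le_trans t1 _.
have abb : a * b ^+ 2 <= a * b.
  rewrite expr2 mulrA -[X in _ <= X]mulr1; apply: ler_wpM2l => //.
  by apply: mulr_ge0; apply: ltW.
have aab : b * a ^+ 2 <= a * b.
  rewrite expr2 mulrA [b * a]mulrC -[X in _ <= X]mulr1; apply: ler_wpM2l => //.
  by apply: mulr_ge0; apply: ltW.
have u1 : x1 ^+ 2 * a ^+ 2 * b ^+ 2 <= 4 * B * (a * b).
  have h1 : x1 ^+ 2 * a * (a * b ^+ 2) <= 4 * B * (a * b ^+ 2).
    apply: ler_wpM2r => //; apply: mulr_ge0; [exact: ltW|exact: sqr_ge0].
  have h2 : 4 * B * (a * b ^+ 2) <= 4 * B * (a * b) by apply: ler_wpM2l => //; lra.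
  have -> : x1 ^+ 2 * a ^+ 2 * b ^+ 2 = x1 ^+ 2 * a * (a * b ^+ 2) by ring.
  exact: le_trans h1 h2.
have u2 : x2 ^+ 2 * a ^+ 2 * b ^+ 2 <= 4 * B * (a * b).
  have h1 : x2 ^+ 2 * b * (b * a ^+ 2) <= 4 * B * (b * a ^+ 2).
    apply: ler_wpM2r => //; apply: mulr_ge0; [exact: ltW|exact: sqr_ge0].
  have h2 : 4 * B * (b * a ^+ 2) <= 4 * B * (a * b) by apply: ler_wpM2l => //; lra.
  have -> : x2 ^+ 2 * a ^+ 2 * b ^+ 2 = x2 ^+ 2 * b * (b * a ^+ 2) by ring.
  exact: le_trans h1 h2.
have -> : (2 * x1 ^+ 2 + 2 * x2 ^+ 2) * (a ^+ 2 * b ^+ 2) =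
  2 * (x1 ^+ 2 * a ^+ 2 * b ^+ 2) + 2 * (x2 ^+ 2 * a ^+ 2 * b ^+ 2) by ring.
lra.
Qed.

Lemma sum_ge_mem {I : eqType} {r : seq I} {x : I} (F : I -> R) :
  x \in r -> (forall y, 0 <= F y) -> F x <= \sum_(y <- r) F y.
Proof.
move=> xr F0; rewrite (big_rem x) //= lerDl; exact: sumr_ge0.
Qed.
End M.

Theorem claim6p2 (R : realType) (A B s : R) (p : nat)
  (hA : 0 < A) (hB : 0 < B) (hs0 : 0 < s) (hs : 1 <= s)
  (hp : (0 < p)%N) (hpB : (p%:R : R) <= Num.sqrt B) :
  (p%:R ^+ 2 / expR 1 <= claim_sum p A B s) /\
  (claim_sum p A B s <= 24 * expR 1 ^+ 4 * pi * B ^+ 2 / p%:R ^+ 2).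
Proof.
have pR : (0 : R) < p%:R by rewrite ltr0n.
have sB0 : 0 < Num.sqrt B by rewrite sqrtr_gt0.
have sB2 : Num.sqrt B ^+ 2 = B by rewrite sqr_sqrtr // ltW.
have psB : p%:R <= s * Num.sqrt B by nra.
have p2B : p%:R ^+ 2 <= B by rewrite -sB2; nra.
have term0 : forall k1 k2 : int, 0 <= ((k1%:~R * p%:R - k2%:~R * p%:R) ^+ 2 *
      expR (- ((k1%:~R * p%:R - A) ^+ 2) / (2 * B)
            - ((k2%:~R * p%:R - A) ^+ 2) / (2 * B)) : R).
  by move=> k1 k2; apply: mulr_ge0; [exact: sqr_ge0|exact: ltW (expR_gt0 _)].
split.
  set k1 := Num.floor (A / p%:R).
  have fl := floor_le (A / p%:R); have fu := floorD1_gt (A / p%:R).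
  rewrite -/k1 in fl fu; rewrite intrD /= in fu.
  have fl' : k1%:~R * p%:R <= A by rewrite -ler_pdivlMr.
  have fu' : A < k1%:~R * p%:R + p%:R.
    by move: fu; rewrite ltr_pdivrMr // mulrDl mul1r.
  have m1 : k1 \in window p A B s.
    by apply: mem_window => //; rewrite ler_norml; lra.
  have m2 : (k1 + 1) \in window p A B s.
    by apply: mem_window => //; rewrite intrD /= mulrDl mul1r ler_norml; lra.
  pose T (k1 k2 : int) : R := ((k1%:~R * p%:R - k2%:~R * p%:R) ^+ 2 *
      expR (- ((k1%:~R * p%:R - A) ^+ 2) / (2 * B)
            - ((k2%:~R * p%:R - A) ^+ 2) / (2 * B))).
  have -> : claim_sum p A B s = \sum_(k <- window p A B s) \sum_(k' <- window p A B s) T k k' by [].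
  apply: le_trans _ (sum_ge_mem (fun k => \sum_(k' <- window p A B s) T k k') m1 _); last first.
    by move=> y; apply: sumr_ge0 => k2 _; exact: term0.
  apply: le_trans _ (sum_ge_mem (T k1) m2 _); last by move=> y; exact: term0.
  rewrite /T.
  rewrite intrD /= mulrDl mul1r.
  have -> : k1%:~R * p%:R - (k1%:~R * p%:R + p%:R) = - (p%:R : R) by ring.
  rewrite sqrrN.
  set x1 := k1%:~R * p%:R - A.
  have -> : k1%:~R * p%:R + p%:R - A = x1 + p%:R by rewrite /x1; ring.
  have x1a : x1 ^+ 2 <= p%:R ^+ 2 by rewrite /x1; nra.
  have x2a : (x1 + p%:R) ^+ 2 <= p%:R ^+ 2 by rewrite /x1; nra.
  have q : (x1 ^+ 2 + (x1 + p%:R) ^+ 2) / (2 * B) <= 1.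
    by rewrite ler_pdivrMr; lra.
  have -> : - x1 ^+ 2 / (2 * B) - (x1 + p%:R) ^+ 2 / (2 * B) =
            - ((x1 ^+ 2 + (x1 + p%:R) ^+ 2) / (2 * B)) by field; lra.
  rewrite -expRN; apply: ler_wpM2l; first exact: sqr_ge0.
  by rewrite ler_expR; lra.
pose h (k : int) : R := expR (- ((k%:~R * p%:R - A) ^+ 2) / (4 * B)).
have step : forall k1 k2 : int, ((k1%:~R * p%:R - k2%:~R * p%:R) ^+ 2 *
      expR (- ((k1%:~R * p%:R - A) ^+ 2) / (2 * B)
            - ((k2%:~R * p%:R - A) ^+ 2) / (2 * B)) : R) <= 16 * B * (h k1 * h k2).
  move=> k1 k2; have := key (k1%:~R * p%:R - A) (k2%:~R * p%:R - A) B hB.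
  by have -> : k1%:~R * p%:R - A - (k2%:~R * p%:R - A) =
     k1%:~R * p%:R - k2%:~R * p%:R :> R by ring.
rewrite /claim_sum.
apply: le_trans (ler_sum _ (fun k1 _ => ler_sum _ (fun k2 _ => step k1 k2))) _.
set S := \sum_(k <- window p A B s) h k.
have -> : \sum_(k1 <- window p A B s) \sum_(k2 <- window p A B s) 16 * B * (h k1 * h k2)
   = 16 * B * (S * S).
  rewrite /S mulr_suml mulr_sumr; apply: eq_bigr => k1 _.
  rewrite mulr_sumr mulr_sumr; apply: eq_bigr => k2 _; ring.
have S0 : 0 <= S by apply: sumr_ge0 => k _; exact: ltW (expR_gt0 _).
set d := p%:R / (2 * Num.sqrt B).
have d0 : 0 < d by apply: divr_gt0; lra.
have dh : d <= 1 / 2 by rewrite /d ler_pdivrMr; lra.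
have SQ : S <= 2 * expR 1 / d.
  set N := window_bound p A B s.
  rewrite /S.
  have -> : window p A B s = [seq k <- [seq (i%:Z - N%:Z)%R | i <- iota 0 (N + N).+1]
     | `|(k%:~R : R) * p%:R - A| <= s * Num.sqrt B] by [].
  rewrite big_filter big_mkcond /=.
  apply: le_trans (_ : \sum_(k <- [seq (i%:Z - N%:Z)%R | i <- iota 0 (N + N).+1]) h k <= _).
    apply: ler_sum => k _; case: ifP => _ //; exact: ltW (expR_gt0 _).
  rewrite big_map.
  set c := (- (N%:R + 1) * p%:R - A) / (2 * Num.sqrt B).
  apply: le_trans (gauss_sum d c (N + N).+1 d0 dh).
  rewrite le_eqVlt; apply/orP; left; apply/eqP; apply: eq_bigr => i _.
  rewrite /h; congr expR.
  have -> : (i.+1%:R : R) = i%:R + 1 by rewrite mulrSr.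
  rewrite intrB /= /c /d -[X in _ / (4 * X)]sB2.
  field; lra.
have e4 : 625/256 <= expR 1 :> R.
  have -> : expR 1 = expR (1/4) ^+ 4 :> R.
    by rewrite -expRM_natl; congr expR; field.
  have a := expR_ge1Dx (1/4 : R).
  have a2 : 25/16 <= expR (1/4) ^+ 2 :> R by rewrite expr2; nra.
  have -> : expR (1/4) ^+ 4 = expR (1/4) ^+ 2 * expR (1/4) ^+ 2 :> R by rewrite -exprD.
  nra.
have pi2 := @pi_ge2 R.
set E := expR 1.
have SQ2 : S * S <= (2 * E / d) * (2 * E / d).
  apply: ler_pM => //.
have dd : 2 * E / d * (2 * E / d) = 16 * E ^+ 2 * B / p%:R ^+ 2.
  by rewrite /d -[X in _ = _ * X / _]sB2; field; lra.
rewrite dd in SQ2.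
have t1 := ler_wpM2l (_ : 0 <= 16 * B) SQ2.
apply: le_trans (t1 _) _; first lra.
have -> : 16 * B * (16 * E ^+ 2 * B / p%:R ^+ 2) = (256 * E ^+ 2) * (B ^+ 2 / p%:R ^+ 2).
  by field; lra.
have -> : 24 * E ^+ 4 * pi * B ^+ 2 / p%:R ^+ 2 = (24 * E ^+ 4 * pi) * (B ^+ 2 / p%:R ^+ 2).
  by field; lra.
apply: ler_wpM2r; first by apply: divr_ge0; exact: sqr_ge0.
have E2 : 11/2 <= E ^+ 2 by have e4E : 625/256 <= E := e4; rewrite expr2; nra.
have -> : E ^+ 4 = E ^+ 2 * E ^+ 2 by rewrite -exprD.
move: E2; move: (E ^+ 2) => y y2.
have yp : 11 <= y * pi by nra.
have : 256 <= 24 * (y * pi) by lra.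
move=> hh; have := ler_wpM2l (_ : 0 <= y) hh.
move=> h2; have : 0 <= y by lra.
move/h2 => h3.
have -> : 24 * (y * y) * pi = y * (24 * (y * pi)) by ring.
lra.
Qed.
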